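(* Let $k\geq2$, $n$, $r$ be positive integers with $r<\frac{(k-1)n}{k}$. Let $\sigma$ be a cyclic order on $[n]$, and let $\mathcal{F}$ be a $k$-wise intersecting family of $\sigma$-intervals of length $r$. If $|\mathcal{F}|=r$, then there is a point $x$ such that $\mathcal{F}$ consists of all $\sigma$-intervals of length $r$ containing $x$.
   Context: A cyclic order on $[n]$ is a permutation $\sigma=(\sigma(1),\dots,\sigma(n))$ of $[n]$ considered up to cyclic rotation. For $x\in[n]$, the $\sigma$-interval of length $r$ starting at $x$ is $\{\sigma(x),\sigma(x+1),\dots,\sigma(x+r-1)\}$, with indices taken modulo $n$ (in $[n]$). A family $\mathcal{F}$ is $k$-wise intersecting if $F_1\cap\cdots\cap F_k\neq\emptyset$ for all $F_1,\dots,F_k\in\mathcal{F}$. *)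

(* Defs.v *)
From mathcomp Require Import all_boot all_fingroup.
Set Implicit Arguments. Unset Strict Implicit. Unset Printing Implicit Defensive.

(* A cyclic order on [n] = 'I_n is represented by a permutation sigma;
   positions are 'I_n, and sigma maps position i to the element sigma(i). *)
Definition sigma_interval (n : nat) (sigma : {perm 'I_n}) (x : 'I_n) (r : nat)
  : {set 'I_n} :=
  [set sigma j | j : 'I_n & ((j + n - x) %% n < r)%N].

Definition is_sigma_interval (n : nat) (sigma : {perm 'I_n}) (r : nat)
  (A : {set 'I_n}) : bool :=
  [exists x : 'I_n, A == sigma_interval sigma x r].

(* k-wise intersecting: any k members (repetitions allowed) have a common point. *)
Definition kwise_intersecting (T : finType) (k : nat) (F : {set {set T}}) : Prop :=
  forall f : 'I_k -> {set T}, (forall i, f i \in F) -> \bigcap_(i < k) f i != set0.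

(* Main.v *)
Require Import Defs.
From mathcomp Require Import all_boot all_fingroup.
From mathcomp Require Import zify.
Set Implicit Arguments. Unset Strict Implicit. Unset Printing Implicit Defensive.

Definition off (n : nat) (a p : 'I_n) : nat := if a <= p then p - a else p + n - a.

Lemma n_pos n (a : 'I_n) : 0 < n.
Proof. exact: leq_ltn_trans (leq0n a) (ltn_ord a). Qed.

Definition sh (n : nat) (a : 'I_n) (d : nat) : 'I_n :=
  Ordinal (ltn_pmod (a + d) (n_pos a)).

Lemma off_lt n (a p : 'I_n) : off a p < n.
Proof. rewrite /off; have := ltn_ord a; have := ltn_ord p; case: ifP => ?; lia. Qed.

Lemma off_self n (a : 'I_n) : off a a = 0.
Proof. by rewrite /off leqnn subnn. Qed.

Lemma off_eq0 n (a p : 'I_n) : off a p = 0 -> p = a.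
Proof.
rewrite /off => h; apply: val_inj => /=; have := ltn_ord a; have := ltn_ord p.
by move: h; case: ifP => ?; lia.
Qed.

Lemma modE x n : 0 < n -> x < n + n -> x %% n = if x < n then x else x - n.
Proof.
move=> n0 h; case: ifP => h2; first by rewrite modn_small.
have -> : x = 1 * n + (x - n) by lia.
by rewrite modnMDl modn_small //; lia.
Qed.

Lemma offE n (a p : 'I_n) : (p + n - a) %% n = off a p.
Proof.
have := ltn_ord a; have := ltn_ord p => hp ha.
rewrite modE; last by lia. 2: lia.
rewrite /off; case: ifP; case: ifP => *; lia.
Qed.

Lemma shE n (a : 'I_n) d : d < n -> val (sh a d) = if a + d < n then a + d else a + d - n.
Proof. move=> hd /=; have := ltn_ord a => ha; rewrite modE; [by [] | lia | lia]. Qed.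

Lemma off_sh n (a : 'I_n) d : d < n -> off a (sh a d) = d.
Proof.
move=> hd; rewrite /off shE //; have := ltn_ord a => ha.
case: (ltnP (a + d) n) => h1 /=; case: ifP => h2; lia.
Qed.

Lemma sh_off n (a p : 'I_n) : sh a (off a p) = p.
Proof.
apply: val_inj; rewrite shE ?off_lt //; rewrite /off.
have := ltn_ord a; have := ltn_ord p => hp ha.
case: (leqP a p) => h1 /=; case: ifP => h2; lia.
Qed.

Lemma sh_sh n (a : 'I_n) x y : sh (sh a x) y = sh a (x + y).
Proof. apply: val_inj => /=; by rewrite modnDml addnA. Qed.

Lemma sh_n n (a : 'I_n) : sh a n = a.
Proof. apply: val_inj => /=; by rewrite modnDr modn_small. Qed.

Lemma sh0 n (a : 'I_n) : sh a 0 = a.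
Proof. apply: val_inj => /=; by rewrite addn0 modn_small. Qed.

Lemma off_rel n (a y t : 'I_n) :
  off y t = if off a y <= off a t then off a t - off a y else off a t + n - off a y.
Proof.
rewrite /off; have := ltn_ord a; have := ltn_ord y; have := ltn_ord t => ht hy ha.
case: (leqP a y) => ? /=; case: (leqP a t) => ? /=; case: (leqP y t) => ? /=;
  case: ifP => ?; lia.
Qed.

Lemma off_sym n (t y : 'I_n) : t != y -> off t y + off y t = n.
Proof.
move=> /eqP ne; have: nat_of_ord t <> nat_of_ord y by move=> /val_inj.
rewrite /off; have := ltn_ord y; have := ltn_ord t => ht hy nv.
case: (leqP t y) => ? /=; case: (leqP y t) => ? /=; lia.
Qed.

Lemma mem_si n (sigma : {perm 'I_n}) x r p :
  (sigma p \in sigma_interval sigma x r) = (off x p < r).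
Proof. by rewrite /sigma_interval mem_imset ?inE ?offE //; exact: perm_inj. Qed.

Lemma class_exists (n m k : nat) (S : {set 'I_n}) (hk : 2 <= k) (hm : 0 < m) (hmn : m < n)
  (hkm : n < k * m)
  (hcov : forall g : 'I_k -> 'I_n, (forall i, g i \in S) ->
          ~ (forall y, exists i, 0 < off y (g i) <= m))
  (a : 'I_n) (haS : a \in S) (j : nat) (hj : j < m) :
  exists z, (z \notin S) && (off a z %% m == j).
Proof.
case: (boolP [exists z, (z \notin S) && (off a z %% m == j)]) => [/existsP //|hne].
exfalso.
have hall : forall z, off a z %% m = j -> z \in S.
  move=> z hz; apply: contraNT hne => hzS; apply/existsP; exists z; by rewrite hzS hz eqxx.
set j' := if j == 0 then m else j.
have hj1 : 0 < j' <= m by rewrite /j'; case: eqP => ?; lia.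
have hjm : j' %% m = j.
  rewrite /j'; case: eqP => [->|?]; [exact: modnn | exact: modn_small].
have hkm1 : (k - 1) * m + m = k * m by rewrite mulnBl mul1n subnK // leq_pmull //; lia.
have hkm2 : 2 * m <= k * m by rewrite leq_mul2r hk orbT.
pose g := fun i : 'I_k => if j' + i * m <= n - 1 then sh a (j' + i * m) else a.
apply: (hcov g).
  move=> i; rewrite /g; case: ifP => h; last done.
  apply: hall; rewrite off_sh; last lia.
  by rewrite addnC modnMDl hjm.
move=> y.
set u := off a y.
have hrel : forall t, off y t = if u <= off a t then off a t - u else off a t + n - u.
  by move=> t; rewrite (off_rel a y t).
have hu : u < n := off_lt a y.
case: (ltnP u (n - m)) => hu2.
  have [i0 [h1 h2]] : exists i0, i0 * m <= u + m - j' /\ u + m - j' < i0 * m + m.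
    exists ((u + m - j') %/ m); split; first exact: leq_divM.
    rewrite {1}(divn_eq (u + m - j') m) ltn_add2l; exact: ltn_pmod.
  have hi0 : i0 < k by rewrite -(ltn_pmul2r hm); lia.
  exists (Ordinal hi0); rewrite /g /= ifT; last lia.
  rewrite hrel off_sh; last lia.
  rewrite ifT; lia.
have hk1 : k - 1 < k by lia.
have hk0 : 0 < k by lia.
case: (leqP (j' + (k - 1) * m) (n - 1)) => hL.
  case: (ltnP u (j' + (k - 1) * m)) => hu3.
    exists (Ordinal hk1); rewrite /g /= ifT //.
    rewrite hrel off_sh; last lia.
    rewrite ifT; lia.
  exists (Ordinal hk0); rewrite /g /= mul0n addn0 ifT; last lia.
  rewrite hrel off_sh; last lia.
  rewrite ifF; lia.
exists (Ordinal hk1); rewrite /g /= ifF; last lia.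
rewrite hrel off_self ifF; lia.
Qed.

Lemma class_unique (n m k : nat) (S : {set 'I_n}) (hk : 2 <= k) (hm : 0 < m) (hmn : m < n)
  (hkm : n < k * m)
  (hcov : forall g : 'I_k -> 'I_n, (forall i, g i \in S) ->
          ~ (forall y, exists i, 0 < off y (g i) <= m))
  (hN : #|~: S| = m)
  (a : 'I_n) (haS : a \in S) (z1 z2 : 'I_n) :
  z1 \notin S -> z2 \notin S -> off a z1 %% m = off a z2 %% m -> z1 = z2.
Proof.
have hex : forall j : 'I_m, exists z, (z \notin S) && (off a z %% m == j).
  move=> j; exact: (class_exists hk hm hmn hkm hcov haS (ltn_ord j)).
pose h j := xchoose (hex j).
have hh : forall j, (h j \notin S) && (off a (h j) %% m == j) := fun j => xchooseP (hex j).
have hinj : injective h.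
  move=> j1 j2 e; apply: ord_inj.
  have /andP [_ /eqP e1] := hh j1; have /andP [_ /eqP e2] := hh j2.
  by rewrite -e1 -e2 e.
have himg : [set h j | j in 'I_m] = ~: S.
  apply/eqP; rewrite eqEcard; apply/andP; split.
    apply/subsetP => z /imsetP [j _ ->]; rewrite inE; by have /andP [->] := hh j.
  by rewrite card_imset // card_ord hN.
have hz : forall z, z \notin S -> z = h (Ordinal (ltn_pmod (off a z) hm)).
  move=> z hz; have : z \in ~: S by rewrite inE.
  rewrite -himg => /imsetP [j _ ->].
  congr h; apply: ord_inj => /=.
  by have /andP [_ /eqP ->] := hh j.
move=> n1 n2 e.
apply: etrans (hz z1 n1) _; apply: esym; apply: etrans (hz z2 n2) _.
by congr h; apply: ord_inj => /=.
Qed.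

Lemma run_start (n m : nat) (S : {set 'I_n}) (hm : 0 < m) (hmn : m < n)
  (hN : #|~: S| = m) : exists2 a, a \in S & sh a (n - 1) \notin S.
Proof.
have /card_gt0P [z hz] : 0 < #|~: S| by rewrite hN.
have hS : #|S| + #|~: S| = n by rewrite cardsC card_ord.
have /card_gt0P [s hs] : 0 < #|S| by lia.
rewrite inE in hz.
have hzs : s != z by apply: contraNneq hz => <-.
have exP : exists d, (0 < d) && (sh z d \in S).
  exists (off z s); rewrite sh_off hs andbT lt0n; apply/eqP => /off_eq0 e.
  by rewrite e eqxx in hzs.
case: (ex_minnP exP) => D /andP [hD0 hDS] hmin.
exists (sh z D) => //.
have hD : D < n.
  have := hmin (off z s); rewrite sh_off hs andbT.
  have := off_lt z s => h1 h2.
  have : 0 < off z s by rewrite lt0n; apply/eqP => /off_eq0 e; rewrite e eqxx in hzs.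
  move=> h3; have := h2 h3; lia.
rewrite sh_sh.
have -> : sh z (D + (n - 1)) = sh z (D - 1).
  apply: val_inj => /=.
  have -> : z + (D + (n - 1)) = z + (D - 1) + n by lia.
  by rewrite modnDr.
case: (posnP (D - 1)) => hD1.
  by rewrite hD1 sh0.
apply/negP => h.
have := hmin (D - 1); rewrite hD1 h => /(_ isT); lia.
Qed.

Lemma modpm1 i m : 0 < i -> 0 < m -> (i * m - 1) %% m = m - 1.
Proof.
move=> hi hm.
have h1 : m <= i * m by rewrite leq_pmull.
have h2 : (i - 1) * m = i * m - m by rewrite mulnBl mul1n.
have -> : i * m - 1 = (i - 1) * m + (m - 1) by lia.
by rewrite modnMDl modn_small //; lia.
Qed.

Lemma main_claim (n m k : nat) (S : {set 'I_n}) (hk : 2 <= k) (hm : 0 < m) (hmn : m < n)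
  (hkm : n < k * m)
  (hcov : forall g : 'I_k -> 'I_n, (forall i, g i \in S) ->
          ~ (forall y, exists i, 0 < off y (g i) <= m))
  (hN : #|~: S| = m)
  (a : 'I_n) (haS : a \in S) (ha1 : sh a (n - 1) \notin S) :
  forall d, 0 < d <= m -> sh a (n - d) \notin S.
Proof.
have cu := class_unique hk hm hmn hkm hcov hN.
case: (eqVneq (n %% m) 0) => hrho.
  move=> d hd; apply/negP => hc.
  set q := n %/ m.
  have hn : n = q * m by rewrite {1}(divn_eq n m) hrho addn0.
  have hq : q < k by rewrite -(ltn_pmul2r hm); lia.
  have hq2 : 1 < q by rewrite -(ltn_pmul2r hm); lia.
  have hchain : forall i, 0 < i < q -> sh a (i * m - 1) \in S.
    move=> i /andP [hi1 hi2]; apply: contraT => hp.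
    have him : i * m < q * m by rewrite ltn_pmul2r.
    have := cu a haS _ _ hp ha1.
    rewrite !off_sh; [|lia|lia].
    have hn1 : (n - 1) %% m = m - 1 by rewrite hn modpm1 //; lia.
    rewrite modpm1 // hn1.
    move=> /(_ erefl) e.
    have := congr1 (off a) e; rewrite !off_sh; [|lia|lia].
    move=> e2; have : i * m = q * m by lia.
    by move/eqP; rewrite eqn_pmul2r // => /eqP; lia.
  pose g := fun i : 'I_k => if i == 0 :> nat then a else if i < q then sh a (i * m - 1)
                            else sh a (n - d).
  apply: (hcov g).
    move=> i; rewrite /g; case: ifP => // h0; case: ifP => // hq1.
    apply: hchain; rewrite hq1 andbT lt0n h0 //.
  move=> y.
  set u := off a y.
  have hrel : forall t, off y t = if u <= off a t then off a t - u else off a t + n - u.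
    by move=> t; rewrite (off_rel a y t).
  have hu : u < n := off_lt a y.
  have hk0 : 0 < k by lia.
  case: (leqP (n - d) u) => h1.
    exists (Ordinal hk0); rewrite /g /= hrel off_self ifF; lia.
  case: (leqP (n - m - 1) u) => h2.
    exists (Ordinal hq); rewrite /g /= ifF; last lia.
    rewrite ltnn hrel off_sh; last lia.
    rewrite ifT; lia.
  have [i0 [h3 h4]] : exists i0, i0 * m <= u + 1 /\ u + 1 < i0 * m + m.
    exists ((u + 1) %/ m); split; first exact: leq_divM.
    rewrite {1}(divn_eq (u + 1) m) ltn_add2l; exact: ltn_pmod.
  have hi : (i0 + 1) * m = i0 * m + m by rewrite mulnDl mul1n.
  have hiq : i0 + 1 < q by rewrite -(ltn_pmul2r hm); lia.
  have hik : i0 + 1 < k by lia.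
  exists (Ordinal hik); rewrite /g /= ifF; last lia.
  rewrite hiq hrel off_sh; last lia.
  rewrite ifT; lia.
have exP : exists d, (0 < d) && (sh a (n - d) \in S).
  by exists n; rewrite subnn sh0 haS andbT; lia.
case: (ex_minnP exP) => D /andP [hD0 hDS] hmin.
suff hmD : m < D.
  move=> d hd; apply/negP => h.
  have := hmin d; rewrite h andbT => /(_ (proj1 (andP hd))); lia.
rewrite ltnNge; apply/negP => hDm.
have hD1 : 1 < D.
  case: (ltngtP D 1) => // hD; first lia.
  by rewrite hD (negbTE ha1) in hDS.
set rho := n %% m.
have hrho1 : 0 < rho by rewrite lt0n.
have hrho2 : rho < m by exact: ltn_pmod.
set d0 := minn rho (D - 1).
have hd0 : 0 < d0 <= D - 1 by rewrite /d0; lia.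
have hd0r : d0 <= rho by rewrite /d0; lia.
set b := sh a (n - D).
have hbS : b \in S by [].
have hu : sh a (n - d0) \notin S.
  apply/negP => h; have := hmin d0; rewrite h andbT => /(_ (proj1 (andP hd0))); lia.
set e := rho - d0.
have heD : e + D <= m by rewrite /e /d0; lia.
have hba : sh b D = a by rewrite /b sh_sh subnK ?sh_n //; lia.
have hbu : sh b (D - d0) = sh a (n - d0).
  rewrite /b sh_sh; congr sh; lia.
have [w /andP [hw1 /eqP hw2]] :=
  class_exists hk hm hmn hkm hcov hbS (ltn_pmod (e + D) hm).
have hoba : off b a = D by rewrite -hba off_sh; lia.
have hobu : off b (sh a (n - d0)) = D - d0 by rewrite -hbu off_sh; lia.
set x := off b w.
have hxw : sh b x = w by rewrite sh_off.
have hx : D < x.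
  case: (ltngtP x D) => // hxD.
    case: (posnP x) => hx0.
      by rewrite -hxw hx0 sh0 hbS in hw1.
    move: hw2; rewrite -/x (modn_small (_ : x < m)); last lia.
    case: (ltngtP (e + D) m) => heD2.
    - rewrite modn_small //; lia.
    - lia.
    - rewrite heD2 modnn; lia.
  by move: hw1; rewrite -hxw hxD hba haS.
have hoaw : off a w = x - D.
  by rewrite (off_rel b a w) hoba -/x ifT //; lia.
have hcls : off a w %% m = e.
  rewrite hoaw.
  have : (x - D) + D = e + D %[mod m] by rewrite subnK ?hw2 //; lia.
  move/eqP; rewrite eqn_modDr => /eqP ->.
  by rewrite modn_small //; lia.
have hclu : off a (sh a (n - d0)) %% m = e.
  rewrite off_sh; last lia.
  have -> : n - d0 = n %/ m * m + e by rewrite {1}(divn_eq n m) -/rho /e; lia.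
  by rewrite modnMDl modn_small //; lia.
have euw := cu a haS _ _ hu hw1 (etrans hclu (esym hcls)).
move: hobu; rewrite euw -/x; lia.
Qed.

Lemma si_inj n (sigma : {perm 'I_n}) r x y : 0 < r < n ->
  sigma_interval sigma x r = sigma_interval sigma y r -> x = y.
Proof.
move=> /andP [hr0 hrn] e.
have hx : off y x < r by rewrite -(mem_si sigma) -e mem_si off_self.
have hp : off y (sh x (n - 1)) >= r.
  rewrite leqNgt -(mem_si sigma) -e mem_si off_sh; lia.
move: hp; rewrite (off_rel x y (sh x (n - 1))) off_sh; last lia.
case: (eqVneq x y) => // hne; have := off_sym hne.
have := off_lt x y; case: ifP => h1; lia.
Qed.

Lemma nocover n r k (sigma : {perm 'I_n}) (F : {set {set 'I_n}}) :
  0 < k -> kwise_intersecting k F ->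
  forall g : 'I_k -> 'I_n, (forall i, sigma_interval sigma (g i) r \in F) ->
    ~ (forall y, exists i, 0 < off y (g i) <= n - r).
Proof.
move=> hk hF g hg hcov.
have := hF (fun i => sigma_interval sigma (g i) r) hg.
case/set0Pn => v /bigcapP hv.
have [i /andP [h1 h2]] := hcov (sigma^-1 v)%g.
have := hv i isT.
rewrite -{1}(permKV sigma v) mem_si.
have hne : g i != (sigma^-1 v)%g.
  by apply/eqP => e; move: h1; rewrite e off_self.
have := off_sym hne; lia.
Qed.

Unset Implicit Arguments.
Theorem lemma2p2 (k n r : nat) (sigma : {perm 'I_n}) (F : {set {set 'I_n}}) :
  (2 <= k)%N -> (0 < n)%N -> (0 < r)%N -> (k * r < (k - 1) * n)%N ->
  (forall A, A \in F -> is_sigma_interval sigma r A) ->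
  kwise_intersecting k F ->
  #|F| = r ->
  exists x : 'I_n,
    F = [set A : {set 'I_n} | is_sigma_interval sigma r A && (x \in A)].
Proof.
move=> hk hn hr hkr hint hF hcard.
have hk1 : (k - 1) * n = k * n - n by rewrite mulnBl mul1n.
have hkn : n <= k * n by rewrite leq_pmull //; lia.
have hrn : r < n.
  rewrite ltnNge; apply/negP => h.
  have : k * n <= k * r by rewrite leq_mul2l h orbT.
  lia.
set m := n - r.
have hm : 0 < m by rewrite /m; lia.
have hmn : m < n by rewrite /m; lia.
have hkm : n < k * m.
  have : k * m = k * n - k * r by rewrite /m mulnBr.
  have : k * r <= k * n by rewrite leq_mul2l ltnW ?orbT.
  lia.
set S := [set s | sigma_interval sigma s r \in F].
have hFS : F = [set sigma_interval sigma s r | s in S].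
  apply/setP => A; apply/idP/imsetP.
    move=> hA; have /existsP [x /eqP eA] := hint A hA.
    by exists x; [rewrite inE -eA | exact: eA].
  by case=> s; rewrite inE => hs ->.
have hinj : {in S &, injective (fun s => sigma_interval sigma s r)}.
  by move=> x y _ _; apply: si_inj; lia.
have hSr : #|S| = r by rewrite -hcard hFS card_in_imset.
have hN : #|~: S| = m by have := cardsC S; rewrite card_ord /m; lia.
have hcov : forall g : 'I_k -> 'I_n, (forall i, g i \in S) ->
          ~ (forall y, exists i, 0 < off y (g i) <= m).
  move=> g hg; apply: (nocover (sigma:=sigma) (F:=F)) => //; first lia.
  by move=> i; have := hg i; rewrite inE.
have [a haS ha1] := run_start hm hmn hN.
have hcl := main_claim hk hm hmn hkm hcov hN haS ha1.
have hout : forall p, r <= off a p -> p \notin S.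
  move=> p hp; rewrite -(sh_off a p); have := off_lt a p => hlt.
  have -> : off a p = n - (n - off a p) by lia.
  apply: hcl; rewrite /m; lia.
have hS0 : S = [set sh a i | i : 'I_r].
  apply/eqP; rewrite eqEcard; apply/andP; split.
    apply/subsetP => s hs.
    have hlt : off a s < r by rewrite ltnNge; apply/negP => /hout; rewrite hs.
    by apply/imsetP; exists (Ordinal hlt) => //=; rewrite sh_off.
  rewrite hSr card_imset ?card_ord //.
  move=> i j e; apply: ord_inj; have := congr1 (off a) e.
  have := ltn_ord i; have := ltn_ord j => hi hj.
  rewrite !off_sh; lia.
set p0 := sh a (r - 1).
have hp0 : off a p0 = r - 1 by rewrite off_sh; lia.
exists (sigma p0).
apply/setP => A; rewrite inE.
apply/idP/idP.
  move=> hA; rewrite hint //=.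
  have /existsP [s /eqP eA] := hint A hA.
  have hs : s \in S by rewrite inE -eA.
  rewrite eA mem_si; move: hs; rewrite hS0 => /imsetP [i _ ->].
  have := ltn_ord i => hi.
  rewrite (off_rel a (sh a i) p0) hp0 off_sh; last lia.
  case: ifP; lia.
case/andP => /existsP [s /eqP ->] hx.
rewrite mem_si in hx.
have : s \in S.
  rewrite hS0; apply/imsetP.
  have hlt : off a s < r.
    move: hx; rewrite (off_rel a s p0) hp0.
    have := off_lt a s; case: ifP; lia.
  by exists (Ordinal hlt) => //=; rewrite sh_off.
by rewrite inE.
Qed.
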